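(* Let $\langle A,\to\rangle$ be a conditional algebra. Then the Stone map $\varphi\colon A\to\mathcal{P}(\mathrm{Ul}(A))$, $\varphi(a)=\{u\in\mathrm{Ul}(A): a\in u\}$, is an embedding of $\langle A,\to\rangle$ into $\mathrm{Em}(A)=\langle \mathcal{P}(\mathrm{Ul}(A)),\to_{T_A}\rangle$. That is, $\varphi$ is an injective Boolean homomorphism and $\varphi(a\to b)=\varphi(a)\to_{T_A}\varphi(b)$ for all $a,b\in A$.
   Context: A conditional algebra is a pair $\langle A,\to\rangle$ where $A$ is a Boolean algebra and $\to$ is a binary operation on $A$ such that for all $a,b,c$: $a\to 1=1$; $(a\to b)\wedge(a\to c)=a\to(b\wedge c)$; $(a\vee b)\to c\le (a\to c)\wedge(b\to c)$. Filters of $A$ include the improper filter $A$; $\mathrm{Ul}(A)$ is the set of ultrafilters. For a filter $F$, $\varphi(F)=\{u\in\mathrm{Ul}(A):F\subseteq u\}$ (so $\varphi(A)=\emptyset$). For $X,Y\subseteq A$, $D^{\to}_X(Y)=\{b\in A:\exists a\in Y,\ a\to b\in X\}$. The relation $T_A\subseteq \mathrm{Ul}(A)\times\mathcal{P}(\mathrm{Ul}(A))\times\mathrm{Ul}(A)$ is defined by: $T_A(u,Z,v)$ iff there is a filter $F$ of $A$ with $Z=\varphi(F)$ and $D^{\to}_u(F)\subseteq v$. Write $T_A(u,Z)=\{v: T_A(u,Z,v)\}$. For $U,V\subseteq \mathrm{Ul}(A)$, $U\to_{T_A}V=\{u\in\mathrm{Ul}(A): \text{for all } Z\subseteq U,\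 T_A(u,Z)\subseteq V\}$. *)

(* Defs.v *)
(* Boolean algebras are MathComp's ctbDistrLatticeType
   (complemented distributive lattices with top and bottom); subsets are
   MathComp-classical's [set T] (= T -> Prop). *)
From HB Require Import structures.
From mathcomp Require Import all_boot all_order.
From mathcomp Require Import classical_sets.
Set Implicit Arguments. Unset Strict Implicit. Unset Printing Implicit Defensive.
Import Order.TTheory.
Local Open Scope classical_set_scope.

Section CondAlg.
Variables (d : Order.disp_t) (A : ctbDistrLatticeType d).

Definition is_conditional (arr : A -> A -> A) : Prop :=
  [/\ forall a : A, arr a Order.top = Order.top,
      forall a b c : A, Order.meet (arr a b) (arr a c) = arr a (Order.meet b c)
    & forall a b c : A,
        (arr (Order.join a b) c <= Order.meet (arr a c) (arr b c))%O].

Definition is_filter (F : set A) : Prop :=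
  [/\ F Order.top,
      forall a b : A, F a -> (a <= b)%O -> F b
    & forall a b : A, F a -> F b -> F (Order.meet a b)].

Definition proper_filter (F : set A) : Prop := is_filter F /\ ~ F Order.bottom.

Definition ultrafilter (u : set A) : Prop :=
  proper_filter u /\ forall G : set A, proper_filter G -> u `<=` G -> G = u.

Definition Ul : set (set A) := [set u | ultrafilter u].

Definition stone (a : A) : set (set A) := [set u | ultrafilter u /\ u a].

Definition phiF (F : set A) : set (set A) := [set u | ultrafilter u /\ F `<=` u].

Definition Dto (arr : A -> A -> A) (X Y : set A) : set A :=
  [set b | exists2 a, Y a & X (arr a b)].

Definition TA (arr : A -> A -> A) (u : set A) (Z : set (set A)) (v : set A) : Prop :=
  [/\ ultrafilter u, ultrafilter v &
      exists F : set A, [/\ is_filter F, Z = phiF F & Dto arr u F `<=` v]].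

Definition TAset (arr : A -> A -> A) (u : set A) (Z : set (set A)) : set (set A) :=
  [set v | TA arr u Z v].

Definition arrT (arr : A -> A -> A) (U V : set (set A)) : set (set A) :=
  [set u | ultrafilter u /\ forall Z, Z `<=` U -> TAset arr u Z `<=` V].

End CondAlg.

(* Main.v *)
Require Import Defs.
From HB Require Import structures.
From mathcomp Require Import all_boot all_order.
From mathcomp Require Import boolp classical_sets.
Set Implicit Arguments. Unset Strict Implicit. Unset Printing Implicit Defensive.
Import Order.TTheory.
Local Open Scope classical_set_scope.

Section Helpers.
Variables (d : Order.disp_t) (A : ctbDistrLatticeType d).
Local Open Scope order_scope.
Implicit Types (a b c x y : A) (F G u : set A).

Lemma disjC (f x : A) : (f `&` x <= \bot) = (f <= ~` x).
Proof. by rewrite lex0 -Order.CTBDistrLatticeTheory.disj_leC. Qed.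

Definition gen F x : set A := fun c => exists2 f, F f & f `&` x <= c.

Lemma gen_filter F x : is_filter F -> is_filter (gen F x).
Proof.
case=> Ft Fup FI; split.
- by exists \top => //; exact: lex1.
- by move=> a b [f Ff le1] le2; exists f => //; exact: le_trans le1 le2.
- move=> a b [f1 F1 l1] [f2 F2 l2]; exists (f1 `&` f2); first exact: FI.
  rewrite lexI; apply/andP; split.
  + by apply: le_trans l1; apply: leI2 => //; exact: leIl.
  + by apply: le_trans l2; apply: leI2 => //; exact: leIr.
Qed.

Lemma gen_sub F x : (forall c, F c -> gen F x c).
Proof. by move=> c Fc; exists c => //; exact: leIl. Qed.

Lemma gen_x F x : is_filter F -> gen F x x.
Proof. by case=> Ft _ _; exists \top => //; exact: leIr. Qed.

Lemma gen_proper F x : is_filter F -> (forall f, F f -> ~ (f <= ~` x)) ->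
  proper_filter (gen F x).
Proof.
move=> HF H; split; first exact: gen_filter.
by case=> f Ff; rewrite disjC => /H; apply.
Qed.


Lemma ultra_ext F : is_filter F -> ~ F \bot ->
  exists u, ultrafilter u /\ (forall c, F c -> u c).
Proof.
move=> HF Fb.
pose P := fun G : set A => proper_filter (setU G F).
have [A0 [PA0 maxA0]] : exists A0, P A0 /\ forall B, (A0 `<` B)%classic -> ~ P B.
  apply: Zorn_bigcup => I IP tot.
  set U := bigcup I id.
  have key : forall x y, setU U F x -> setU U F y ->
      F x /\ F y \/ exists G, I G /\ setU G F x /\ setU G F y.
    move=> x y [[G IG Gx]|Fx] [[G' IG' Gy]|Fy].
    - case: (tot G G' IG IG') => sub.
      + by right; exists G'; split => //; split; [left; apply: sub|left].
      + by right; exists G; split => //; split; [left|left; apply: sub].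
    - by right; exists G; split => //; split; [left|right].
    - by right; exists G'; split => //; split; [right|left].
    - by left.
  have inU : forall G c, I G -> setU G F c -> setU U F c.
    by move=> G c IG [Gc|Fc]; [left; exists G|right].
  case: HF => Ft Fup FI.
  split; first split.
  - by right.
  - move=> a b Ha ab.
    case: (key a a Ha Ha) => [[Fa _]|[G [IG [Ga _]]]].
      by right; apply: Fup ab.
    by apply: (inU G) => //; case: (IP G IG) => [[_ up _] _]; apply: up ab.
  - move=> a b Ha Hb; case: (key a b Ha Hb) => [[Fa Fb']|[G [IG [Ga Gb]]]].
      by right; apply: FI.
    by apply: (inU G) => //; case: (IP G IG) => [[_ _ mI] _]; apply: mI.
  - move=> [[G IG Gb]|//].
    by case: (IP G IG) => _; apply; left.
exists (setU A0 F); split; last by move=> c Fc; right.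
split => // G PG sub.
have GF : setU G F = G by apply/setUidl => c Fc; apply: sub; right.
have PGG : P G by rewrite /P GF.
have A0G : (A0 `<=` G)%classic by move=> c A0c; apply: sub; left.
have GA0 : (G `<=` A0)%classic.
  apply: contrapT => nGA; apply: (maxA0 G) => //; split => //.
apply/seteqP; split => // c Gc; left; exact: GA0.
Qed.

Lemma ultra_ext_x F x : is_filter F -> (forall f, F f -> ~ (f <= ~` x)) ->
  exists u, [/\ ultrafilter u, (forall c, F c -> u c) & u x].
Proof.
move=> HF H; have [Hg Hb] := gen_proper HF H.
have [u [uu sub]] := ultra_ext Hg Hb.
exists u; split => //; first by move=> c Fc; apply/sub/gen_sub.
by apply/sub/gen_x.
Qed.

Lemma uf_filter u : ultrafilter u -> is_filter u.
Proof. by case=> [[]]. Qed.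

Lemma uf_nb u : ultrafilter u -> ~ u \bot.
Proof. by case=> [[]]. Qed.

Lemma uf_compl u a : ultrafilter u -> (u (~` a) <-> ~ u a).
Proof.
move=> uu; have [ut uup uI] := uf_filter uu; split.
  by move=> uc ua; apply: (uf_nb uu); rewrite -(Order.CTBDistrLatticeTheory.meetxC a); apply: uI.
move=> nua; apply: contrapT => nuc.
have Hp : forall f, u f -> ~ (f <= ~` a) by move=> f uf fa; apply: nuc; apply: uup fa.
have [Hg Hb] := gen_proper (uf_filter uu) Hp.
have eq := (proj2 uu) _ (conj Hg Hb) (fun c (h : u c) => @gen_sub u a c h).
by apply: nua; rewrite -eq; apply: gen_x.
Qed.

Lemma uf_join u a b : ultrafilter u -> (u (a `|` b) <-> u a \/ u b).
Proof.
move=> uu; have [ut uup uI] := uf_filter uu; split.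
  move=> uab; apply: contrapT => /not_orP [na nb].
  move/(uf_compl _ uu): na => na; move/(uf_compl _ uu): nb => nb.
  have := uI _ _ na nb; rewrite -Order.CTBDistrLatticeTheory.complU; move/(uf_compl _ uu); exact.
by case=> [ua|ub]; [apply: uup ua _; exact: leUl|apply: uup ub _; exact: leUr].
Qed.

Lemma in_F_of_phi F a : is_filter F ->
  (forall u, ultrafilter u -> (forall c, F c -> u c) -> u a) -> F a.
Proof.
move=> HF H; apply: contrapT => nFa.
have Hp : forall f, F f -> ~ (f <= ~` (~` a)).
  by move=> f Ff; rewrite Order.CTBDistrLatticeTheory.complK => fa; apply: nFa; case: HF => _ up _; apply: up fa.
have [u [uu sub ua]] := ultra_ext_x HF Hp.
by move/(uf_compl _ uu): ua; apply; apply: H.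
Qed.

Definition up (a : A) : set A := fun c => a <= c.

Lemma up_filter a : is_filter (up a).
Proof.
split; first exact: lex1.
- by move=> x y ax xy; apply: le_trans xy.
- by move=> x y ax ay; rewrite /up lexI ax ay.
Qed.

Lemma le_of_stone a b : (forall u, ultrafilter u -> u a -> u b) -> a <= b.
Proof.
move=> H; apply: (@in_F_of_phi (up a) b (up_filter a)) => u uu sub.
by apply: H => //; apply: sub; exact: lexx.
Qed.


Section Arr.
Variable arr : A -> A -> A.
Hypothesis Harr : is_conditional arr.

Lemma arr_mono a x y : x <= y -> arr a x <= arr a y.
Proof.
case: Harr => _ H2 _ xy; rewrite -(meet_idPl xy) -H2; exact: leIr.
Qed.

Lemma arr_anti a a' c : a <= a' -> arr a' c <= arr a c.
Proof.
case: Harr => _ _ H3 aa'; have := H3 a a' c; rewrite (join_idPr aa') => h.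
by apply: le_trans h _; exact: leIl.
Qed.

Lemma stone_arr_sub a b u : ultrafilter u -> u (arr a b) ->
  forall Z, (Z `<=` stone a)%classic -> (TAset arr u Z `<=` stone b)%classic.
Proof.
move=> uu uab Z Zs v [_ vu [F [HF eZ sub]]]; split => //; apply: sub.
exists a => //; apply: in_F_of_phi => // w ww Fw.
have : stone a w by apply: Zs; rewrite eZ.
by case.
Qed.

Lemma stone_arr_sup a b u : ultrafilter u ->
  (forall Z, (Z `<=` stone a)%classic -> (TAset arr u Z `<=` stone b)%classic) ->
  u (arr a b).
Proof.
move=> uu H; apply: contrapT => nab.
have [ut uup uI] := uf_filter uu.
pose D : set A := fun c => u (arr a c).
have HD : is_filter D.
  case: Harr => H1 H2 _; split.
  - by rewrite /D H1.
  - by move=> x y Dx xy; apply: uup Dx _; exact: arr_mono.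
  - by move=> x y Dx Dy; rewrite /D -H2; apply: uI.
have Hp : forall f, D f -> ~ (f <= ~` (~` b)).
  by move=> f Df; rewrite Order.CTBDistrLatticeTheory.complK => fb; apply: nab; apply: uup Df _; exact: arr_mono.
have [v [vu sub vb]] := ultra_ext_x HD Hp.
have : stone b v.
  apply: (H (phiF (up a))).
    by move=> w [ww sw]; split => //; apply: sw; exact: lexx.
  split => //; exists (up a); split => //; first exact: up_filter.
  move=> c [a' aa' ua']; apply: sub; apply: uup ua' _; exact: arr_anti.
by case=> _; move/(uf_compl _ vu): vb.
Qed.

End Arr.

End Helpers.

Unset Implicit Arguments.

Theorem theorem2p10 (d : Order.disp_t) (A : ctbDistrLatticeType d)
  (arr : A -> A -> A) (Harr : is_conditional arr) :
  [/\ injective (@stone d A),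
      stone (Order.top : A) = @Ul d A /\ stone (Order.bottom : A) = set0,
      (forall a b : A, stone (Order.meet a b) = stone a `&` stone b /\
                       stone (Order.join a b) = stone a `|` stone b),
      (forall a : A, stone (Order.compl a) = @Ul d A `\` stone a)
    & forall a b : A, stone (arr a b) = arrT arr (stone a) (stone b)].
Proof.
split.
- move=> a b eq; apply: Order.POrderTheory.le_anti; apply/andP; split;
    apply: le_of_stone => u uu ua.
  + have : stone a u by []. by rewrite eq => -[].
  + have : stone b u by []. by rewrite -eq => -[].
- split; apply/seteqP; split => u /=.
  + by case.
  + by move=> uu; split => //; case: (uf_filter uu).
  + by case=> uu /(uf_nb uu).
  + by [].
- move=> a b; split; apply/seteqP; split => u /=.
  + case=> uu uab; have [_ upc _] := uf_filter uu.
    split; split => //; [exact: (upc _ _ uab (leIl _ _))|exact: (upc _ _ uab (leIr _ _))].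
  + by case=> -[uu ua] [_ ub]; split => //; case: (uf_filter uu) => _ _; apply.
  + by case=> uu /(uf_join _ _ uu) [ua|ub]; [left|right].
  + case=> -[uu ua]; split => //; apply/(uf_join _ _ uu); by [left|right].
- move=> a; apply/seteqP; split => u /=.
  + by case=> uu /(uf_compl _ uu) na; split => // -[].
  + by case=> uu na; split => //; apply/(uf_compl _ uu) => ua; apply: na.
- move=> a b; apply/seteqP; split => u /=.
  + by case=> uu uab; split => //; move=> Z; exact: (stone_arr_sub uu uab).
  + by case=> uu H; split => //; exact: (stone_arr_sup Harr uu H).
Qed.
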